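(* Let $\mathcal{X}$ be a finite set, $\phi\notin\mathcal{X}$, $L,T\in\mathbb{N}$, positions $i_0,\dots,i_{T-1}\in\{0,\dots,L-1\}$ fixed, and $\Pi_t$ ($t=0,\dots,T-1$) probability distributions on $\mathcal{X}\cup\{\phi\}$. Let $X_0\sim P^*$ on $\mathcal{X}^L$, let $Z_0,\dots,Z_{T-1}$ be independent, independent of $X_0$, with $Z_t\sim\Pi_t$, and define the forward process by $X_{t+1,j}=X_{t,j}$ for $j\ne i_t$, $X_{t+1,i_t}=X_{t,i_t}$ if $Z_t=\phi$, and $X_{t+1,i_t}=Z_t$ if $Z_t\in\mathcal{X}$. Let $P_t$ denote the law of $X_t$. Define the reverse Glauber dynamics as follows: given $\hat X_{t+1}\in\mathcal{X}^L$, set $\hat X_{t,j}=\hat X_{t+1,j}$ for all $j\neq i_t$, and sample $\hat X_{t,i_t}$ from the distribution $a\mapsto\mathbb{P}\big(X_{t,i_t}=a\mid X_{t+1,-i_t}=\hat X_{t+1,-i_t}\big)$ (computed under the forward process). If $\hat X_T\sim P_T$ and $\hat X_0$ is obtained by applying the reverse Glauber dynamics successively for $t=T-1,T-2,\dots,0$, then $\hat X_0\sim P^*$.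
   Context: For $x\in\mathcal{X}^L$ and $i\in\{0,\dots,L-1\}$, $x_i$ is the $i$-th coordinate and $x_{-i}\in\mathcal{X}^{L-1}$ is the sequence obtained by deleting the $i$-th coordinate. *)

(* Defs.v *)
From HB Require Import structures.
From mathcomp Require Import all_boot all_order all_algebra.
Set Implicit Arguments. Unset Strict Implicit. Unset Printing Implicit Defensive.
Import Order.TTheory GRing.Theory Num.Theory.
Local Open Scope ring_scope.

Notation state X L := {ffun 'I_L -> X}.

Definition is_distr (R : realFieldType) (A : finType) (p : A -> R) : Prop :=
  (forall a, 0 <= p a) /\ \sum_(a : A) p a = 1.

Definition del (X : finType) (L : nat) (i : 'I_L) (x : state X L) : seq X :=
  [seq x j | j <- enum 'I_L & j != i].

(* One forward update at position i with noise z (None = phi). *)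
Definition step (X : finType) (L : nat) (i : 'I_L) (x : state X L)
  (z : option X) : state X L :=
  match z with
  | None => x
  | Some a => [ffun j => if j == i then a else x j]
  end.

(* X_t as a function of X_0 and (Z_0, ..., Z_{T-1}). *)
Fixpoint fwd (X : finType) (L T : nat) (pos : 'I_T -> 'I_L)
  (x0 : state X L) (zs : {ffun 'I_T -> option X}) (t : nat) : state X L :=
  match t with
  | 0 => x0
  | t'.+1 =>
      let x := fwd pos x0 zs t' in
      match insub t' with
      | Some s => step (pos s) x (zs s)
      | None => x
      end
  end.

(* Sample space: (X_0, Z_0..Z_{T-1}) with the product (independent) law. *)
Definition Omega (X : finType) (L T : nat) : finType :=
  (state X L * {ffun 'I_T -> option X})%type.

Definition weight (R : realFieldType) (X : finType) (L T : nat)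
  (Pstar : state X L -> R) (Pi : 'I_T -> option X -> R) (w : Omega X L T) : R :=
  Pstar w.1 * \prod_(t < T) Pi t (w.2 t).

Definition prob (R : realFieldType) (X : finType) (L T : nat)
  (Pstar : state X L -> R) (Pi : 'I_T -> option X -> R)
  (E : pred (Omega X L T)) : R :=
  \sum_(w | E w) weight Pstar Pi w.

Definition Plaw (R : realFieldType) (X : finType) (L T : nat)
  (pos : 'I_T -> 'I_L) (Pstar : state X L -> R) (Pi : 'I_T -> option X -> R)
  (t : nat) (x : state X L) : R :=
  prob Pstar Pi [pred w | fwd pos w.1 w.2 t == x].

(* P(X_{t,i_t} = a | X_{t+1,-i_t} = y_{-i_t}) under the forward process
   (MathComp convention: 0 if the conditioning event has probability 0). *)
Definition cond (R : realFieldType) (X : finType) (L T : nat)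
  (pos : 'I_T -> 'I_L) (Pstar : state X L -> R) (Pi : 'I_T -> option X -> R)
  (t : 'I_T) (y : state X L) (a : X) : R :=
  let i := pos t in
  prob Pstar Pi [pred w | (fwd pos w.1 w.2 t i == a) &&
                          (del i (fwd pos w.1 w.2 t.+1) == del i y)]
  / prob Pstar Pi [pred w | del i (fwd pos w.1 w.2 t.+1) == del i y].

(* One reverse Glauber step at time t: law of hat X_t from law mu of hat X_{t+1}. *)
Definition rev_step (R : realFieldType) (X : finType) (L T : nat)
  (pos : 'I_T -> 'I_L) (Pstar : state X L -> R) (Pi : 'I_T -> option X -> R)
  (t : 'I_T) (mu : state X L -> R) (x : state X L) : R :=
  \sum_(y : state X L)
     mu y * ((([forall j, (j != pos t) ==> (x j == y j)] : bool)%:R)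
             * cond pos Pstar Pi t y (x (pos t))).

(* Main.v *)
Require Import Defs.
From HB Require Import structures.
From mathcomp Require Import all_boot all_order all_algebra.
Set Implicit Arguments. Unset Strict Implicit. Unset Printing Implicit Defensive.
Import Order.TTheory GRing.Theory Num.Theory.
Local Open Scope ring_scope.

Lemma del_eq (X : finType) (L : nat) (i : 'I_L) (u v : state X L) :
  (del i u == del i v) = [forall j, (j != i) ==> (u j == v j)].
Proof.
apply/eqP/forallP => [H j|H].
  apply/implyP => hj.
  have := (proj2 (eq_in_map (fun j => u j) (fun j => v j) _)) H j.
  by rewrite mem_filter mem_enum hj andbT => ->.
rewrite /del; apply/eq_in_map => j; rewrite mem_filter mem_enum andbT => hj.
by have /implyP/(_ hj)/eqP := H j.
Qed.

Lemma fwdS (X : finType) (L T : nat) (pos : 'I_T -> 'I_L) x0 zs (t : 'I_T) :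
  @fwd X L T pos x0 zs t.+1 = step (pos t) (fwd pos x0 zs t) (zs t).
Proof.
rewrite /=; case: insubP => [s _ /val_inj -> //|]; by rewrite ltn_ord.
Qed.

Lemma step_other (X : finType) (L : nat) (i : 'I_L) (u : state X L) z j :
  j != i -> step i u z j = u j.
Proof. by case: z => [a|] //= hj; rewrite ffunE (negbTE hj). Qed.

Section Main.
Variables (R : realFieldType) (X : finType) (L T : nat)
  (pos : 'I_T -> 'I_L) (Pstar : {ffun 'I_L -> X} -> R)
  (Pi : 'I_T -> option X -> R)
  (hPstar : is_distr Pstar) (hPi : forall t, is_distr (Pi t)).

Lemma weight_ge0 w : 0 <= weight Pstar Pi w.
Proof.
rewrite /weight; apply: mulr_ge0; first exact: hPstar.1.
by apply: prodr_ge0 => t _; exact: (hPi t).1.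
Qed.

Lemma rev_stepE (t : 'I_T) mu :
  (forall y, mu y = Plaw pos Pstar Pi t.+1 y) ->
  forall x, rev_step pos Pstar Pi t mu x = Plaw pos Pstar Pi t x.
Proof.
move=> hmu x; set i := pos t.
set N := prob Pstar Pi [pred w | (fwd pos w.1 w.2 t i == x i) &&
                          (del i (fwd pos w.1 w.2 t.+1) == del i x)].
set D := prob Pstar Pi [pred w | del i (fwd pos w.1 w.2 t.+1) == del i x].
have hc : forall y : state X L, [forall j, (j != i) ==> (x j == y j)] ->
    cond pos Pstar Pi t y (x i) = N / D.
  move=> y hy; rewrite /cond -/i.
  have -> : del i y = del i x.
    apply/eqP; rewrite del_eq; apply/forallP => j; apply/implyP => hj.
    by have /implyP/(_ hj)/eqP-> := forallP hy j.
  by [].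
have -> : rev_step pos Pstar Pi t mu x =
   (\sum_(y : state X L) mu y * ([forall j, (j != i) ==> (x j == y j)] : bool)%:R) * (N / D).
  rewrite /rev_step mulr_suml; apply: eq_bigr => y _.
  case: (boolP [forall j, (j != i) ==> (x j == y j)]) => hy; last by rewrite /= !(mul0r, mulr0).
  by rewrite hc // mulr1 mul1r.
have -> : \sum_(y : state X L) mu y * ([forall j, (j != i) ==> (x j == y j)] : bool)%:R = D.
  under eq_bigr do rewrite hmu /Plaw /prob big_mkcond mulr_suml.
  rewrite exchange_big /D /prob [RHS]big_mkcond; apply: eq_bigr => w _ /=.
  rewrite (bigD1 (fwd pos w.1 w.2 t.+1)) //= eqxx big1; last first.
    by move=> y /negbTE; rewrite eq_sym => ->; rewrite mul0r.
  rewrite addr0 eq_sym del_eq.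
  by case: ifP => _; rewrite ?mulr1 ?mulr0.
have hN : N = Plaw pos Pstar Pi t x.
  rewrite /N /Plaw /prob; apply: eq_bigl => w; rewrite !inE fwdS.
  rewrite del_eq; apply/andP/eqP => [[/eqP hi /forallP hf]|->].
    apply/ffunP => j; case: (eqVneq j i) => [->//|hj].
    have /implyP/(_ hj)/eqP := hf j.
    by rewrite step_other.
  split=> //; apply/forallP => j; apply/implyP => hj.
  by rewrite step_other.
have hND : N <= D.
  rewrite /N /D /prob [X in X <= _]big_mkcond [X in _ <= X]big_mkcond.
  apply: ler_sum => w _ /=.
  case: ifP => [/andP[_ ->]//|_]; case: ifP => // _; exact: weight_ge0.
rewrite -hN; have [D0|Dn0] := eqVneq D 0.
  have N0 : 0 <= N by rewrite /N /prob sumr_ge0 // => w _; exact: weight_ge0.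
  rewrite D0 mul0r; apply/esym/le_anti/andP; split=> //.
  by rewrite -D0.
by rewrite mulrC divfK.
Qed.

End Main.

Theorem lemma2 (R : realFieldType) (X : finType) (L T : nat)
  (pos : 'I_T -> 'I_L) (Pstar : {ffun 'I_L -> X} -> R)
  (Pi : 'I_T -> option X -> R)
  (hPstar : is_distr Pstar) (hPi : forall t, is_distr (Pi t))
  (Q : nat -> {ffun 'I_L -> X} -> R)
  (hQT : forall x, Q T x = Plaw pos Pstar Pi T x)
  (hQ : forall (t : 'I_T) x, Q (nat_of_ord t) x = rev_step pos Pstar Pi t (Q t.+1) x) :
  forall x, Q 0%N x = Pstar x.
Proof.
have H : forall n, (n <= T)%N -> forall x, Q (T - n)%N x = Plaw pos Pstar Pi (T - n)%N x.
  elim=> [|n IH] hn x; first by rewrite subn0.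
  have ht : (T - n.+1 < T)%N by rewrite ltn_subrL /=; apply: leq_trans hn.
  have := hQ (Ordinal ht) x => /= ->.
  have e : (T - n.+1).+1 = (T - n)%N by rewrite subnSK.
  have := rev_stepE hPstar hPi (t := Ordinal ht) (mu := Q (T - n.+1).+1).
  rewrite /= => ->; first by [].
  by move=> y; rewrite e IH 1?ltnW.
move=> x; have := H T (leqnn T) x; rewrite subnn => ->.
rewrite /Plaw /prob /weight /=.
rewrite (eq_bigl (fun w : Omega X L T => (w.1 == x) && true)); last by move=> w; rewrite andbT.
rewrite -(pair_big_dep (pred1 x) (fun _ _ => true) (fun a (b : {ffun 'I_T -> option X}) => Pstar a * \prod_(t < T) Pi t (b t))) /=.
rewrite big_pred1_eq -mulr_sumr -bigA_distr_bigA /= big1 ?mulr1 //.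
by move=> t _; exact: (hPi t).2.
Qed.
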